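(* Let $1<p<\infty$, $\frac1p+\frac1q=1$, and let $\mathcal{U}$ be a nonprincipal ultrafilter on $\mathbb{N}$. Let $R_p$ and $R_q$ denote the projections on $(L^{p})^{\mathcal{U}}$ and $(L^{q})^{\mathcal{U}}$ given by $R_s[(f_n)_{n,\mathcal{U}}]=\lim_{r\to\infty}(f_nI(|f_n|>r))_{n,\mathcal{U}}$ ($s=p,q$). Then $R_p^{*}=R_q$ under the duality $(L^{p})^{\mathcal{U}*}=(L^{q})^{\mathcal{U}}$; that is, for all $(f_n)_{n,\mathcal{U}}\in(L^{p})^{\mathcal{U}}$ and $(g_n)_{n,\mathcal{U}}\in(L^{q})^{\mathcal{U}}$, $\langle R_p[(f_n)_{n,\mathcal{U}}],(g_n)_{n,\mathcal{U}}\rangle=\langle (f_n)_{n,\mathcal{U}},R_q[(g_n)_{n,\mathcal{U}}]\rangle$.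
   Context: $L^{p}=L^{p}([0,1],\mu)$, $\mu$ Lebesgue measure, real scalars; $(L^{p})^{\mathcal{U}}$ is the ultrapower of $L^p$ and $(f_n)_{n,\mathcal{U}}$ the class of a bounded sequence. The limit defining $R_s$ exists in norm and $R_s$ is a bounded linear projection. The dual pairing is $\langle (f_n)_{n,\mathcal{U}},(g_n)_{n,\mathcal{U}}\rangle=\lim_{n,\mathcal{U}}\int f_ng_n\,d\mu$, which identifies $(L^{q})^{\mathcal{U}}$ with the dual of $(L^{p})^{\mathcal{U}}$. $I(|f|>r)$ is the indicator of $\{|f|>r\}$. *)

(* Defs.v *)
From HB Require Import structures.
From mathcomp Require Import all_boot all_order all_algebra.
From mathcomp Require Import all_classical all_reals all_analysis.
Set Implicit Arguments. Unset Strict Implicit. Unset Printing Implicit Defensive.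
Import Order.TTheory GRing.Theory Num.Theory.
Import numFieldNormedType.Exports.
Local Open Scope classical_set_scope.
Local Open Scope ring_scope.

Section Ultrapower.
Variable R : realType.

Definition I01 : set R := `[0, 1].

Definition inLp (s : R) (f : R -> R) : Prop :=
  measurable_fun I01 f /\
  (\int[lebesgue_measure]_(x in I01) ((`|f x| `^ s)%:E) < +oo)%E.

Definition lpnorm (s : R) (f : R -> R) : R :=
  (fine (\int[lebesgue_measure]_(x in I01) ((`|f x| `^ s)%:E))) `^ s^-1.

(* a bounded sequence in L^s : a representative of an element of (L^s)^U *)
Definition bdd_seq (s : R) (F : nat -> R -> R) : Prop :=
  (forall n, inLp s (F n)) /\ exists M : R, forall n, lpnorm s (F n) <= M.

Definition ulim (U : set_system nat) (a : nat -> R) : R := lim (a @ U).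

Definition unorm (s : R) (U : set_system nat) (F : nat -> R -> R) : R :=
  ulim U (fun n => lpnorm s (F n)).

Definition upair (U : set_system nat) (F G : nat -> R -> R) : R :=
  ulim U (fun n => fine (\int[lebesgue_measure]_(x in I01) ((F n x * G n x)%:E))).

Definition trunc (r : R) (f : R -> R) : R -> R :=
  fun x => if r < `|f x| then f x else 0.

(* H represents R_s[(f_n)_{n,U}] = lim_{r->oo} (f_n I(|f_n|>r))_{n,U},
   the limit taken in the norm of (L^s)^U *)
Definition is_Rs (s : R) (U : set_system nat) (F H : nat -> R -> R) : Prop :=
  bdd_seq s H /\
  (fun r : R => unorm s U (fun n => H n \- trunc r (F n))) @ +oo --> (0 : R).

End Ultrapower.

(* Main.v *)
Require Import Defs.
From HB Require Import structures.
From mathcomp Require Import all_boot all_order all_algebra.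
From mathcomp Require Import all_classical all_reals all_analysis.
From mathcomp Require Import measurable_realfun.
From mathcomp Require Import ring lra.
Import Order.TTheory GRing.Theory Num.Theory.
Import numFieldNormedType.Exports.
Local Open Scope classical_set_scope.
Local Open Scope ring_scope.
Set Implicit Arguments. Unset Strict Implicit. Unset Printing Implicit Defensive.
Section A.
Variable R : realType.
Local Notation mu := (@lebesgue_measure R).
Local Notation D := (@I01 R).
Implicit Types (s r : R) (f u v w : R -> R).

Definition Ip (s : R) (f : R -> R) : R := \int[mu]_(x in D) (`|f x| `^ s).

Lemma mD : measurable (D : set (measurableTypeR R)).
Proof. exact: measurable_itv. Qed.

Lemma mpow (s : R) (f : R -> R) : measurable_fun D f -> measurable_fun D (fun x => `|f x| `^ s).
Proof.
move=> mf.
apply: (@measurableT_comp _ _ _ _ _ _ (@powR R ^~ s)) => //.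
exact: measurableT_comp.
Qed.

Lemma Ip_ge0 s f : 0 <= Ip s f.
Proof. by apply: Rintegral_ge0 => x _; exact: powR_ge0. Qed.

Lemma Ip_lpnorm s f : 0 < s -> Ip s f = lpnorm s f `^ s.
Proof.
move=> s0; rewrite /lpnorm -powRrM mulVf ?gt_eqF// powRr1//.
exact: Ip_ge0.
Qed.

Lemma lpnorm_ge0 s f : 0 <= lpnorm s f.
Proof. exact: powR_ge0. Qed.

Lemma int_pow s f : inLp s f -> mu.-integrable D (EFin \o (fun x => `|f x| `^ s)).
Proof.
move=> [mf fin]; apply/integrableP; split.
  by apply/measurable_EFinP; exact: mpow.
under eq_integral do rewrite /= ger0_norm ?powR_ge0//.
exact: fin.
Qed.

Lemma mtrunc r f : measurable_fun D f -> measurable_fun D (trunc r f).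
Proof.
move=> mf.
have mlt : measurable_fun D (fun x => r < `|f x|).
  by apply: measurable_fun_ltr => //; exact: measurableT_comp.
apply: (measurable_fun_if mD mlt) => //.
by apply: (measurable_funS mD _ mf); exact: subIsetl.
Qed.

Lemma trunc_le r f x : `|trunc r f x| <= `|f x|.
Proof. by rewrite /trunc; case: ifP => // _; rewrite normr0. Qed.

Lemma inLp_le s u f : 0 < s -> measurable_fun D u -> inLp s f ->
  (forall x, `|u x| <= `|f x|) -> inLp s u /\ Ip s u <= Ip s f.
Proof.
move=> s0 mu' Lf uf.
have iu : mu.-integrable D (EFin \o (fun x => `|u x| `^ s)).
  apply: (le_integrable mD _ _ (int_pow Lf)).
  - by apply/measurable_EFinP; exact: mpow.
  move=> x _ /=; rewrite lee_fin (ger0_norm (powR_ge0 _ _)) (ger0_norm (powR_ge0 _ _)).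
  by apply: ge0_ler_powR => //; exact: ltW.
split.
  split => //; move/integrableP: iu => [_].
  by under eq_integral do rewrite /= ger0_norm ?powR_ge0//.
apply: le_Rintegral => //; first exact: mD; first exact: int_pow.
move=> x _; apply: ge0_ler_powR => //; exact: ltW.
Qed.


Lemma iLin a b (A B : R -> R) : mu.-integrable D (EFin \o A) ->
  mu.-integrable D (EFin \o B) ->
  mu.-integrable D (EFin \o (fun x => a * A x + b * B x)) /\
  \int[mu]_(x in D) (a * A x + b * B x) =
    a * \int[mu]_(x in D) A x + b * \int[mu]_(x in D) B x.
Proof.
move=> iA iB.
have i1 := integrableZl mD a iA.
have i2 := integrableZl mD b iB.
have i1' : mu.-integrable D (EFin \o (fun x => a * A x)).
  by apply: (eq_integrable mD _ _ _ i1) => x _; rewrite /= EFinM.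
have i2' : mu.-integrable D (EFin \o (fun x => b * B x)).
  by apply: (eq_integrable mD _ _ _ i2) => x _; rewrite /= EFinM.
split.
  apply: (eq_integrable mD _ _ _ (integrableD mD i1' i2')) => x _.
  by rewrite /= EFinD.
rewrite (RintegralD mD i1' i2') (RintegralZl _ mD iA) (RintegralZl _ mD iB).
by [].
Qed.

Lemma pw_sub s (a b : R) : 0 < s -> `|a - b| `^ s <= 2 `^ s * `|a| `^ s + 2 `^ s * `|b| `^ s.
Proof.
move=> s0.
have h : forall x y : R, `|y| <= `|x| -> `|x - y| `^ s <= 2 `^ s * `|x| `^ s.
  move=> x y yx; rewrite -powRM//.
  apply: ge0_ler_powR; rewrite ?nnegrE ?mulr_ge0//; first exact: ltW.
  by apply: (le_trans (ler_normB _ _)); lra.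
have [ab|ba] := lerP `|b| `|a|.
  apply: le_trans (h _ _ ab) _; rewrite lerDl mulr_ge0//; exact: powR_ge0.
rewrite distrC; apply: le_trans (h _ _ (ltW ba)) _.
rewrite lerDr mulr_ge0//; exact: powR_ge0.
Qed.

Lemma inLp_sub s u w : 0 < s -> inLp s u -> inLp s w ->
  inLp s (u \- w) /\ Ip s (u \- w) <= 2 `^ s * Ip s u + 2 `^ s * Ip s w.
Proof.
move=> s0 Lu Lw.
have [iL eL] := iLin (2 `^ s) (2 `^ s) (int_pow Lu) (int_pow Lw).
have mB : measurable_fun D (u \- w).
  by apply: measurable_funB; [case: Lu|case: Lw].
have iu : mu.-integrable D (EFin \o (fun x => `|(u \- w) x| `^ s)).
  apply: (le_integrable mD _ _ iL).
  - by apply/measurable_EFinP; exact: mpow.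
  move=> x _ /=; rewrite lee_fin (ger0_norm (powR_ge0 _ _)).
  apply: le_trans (pw_sub _ _ s0) (ler_norm _).
split.
  split => //; move/integrableP: iu => [_].
  by under eq_integral do rewrite /= ger0_norm ?powR_ge0//.
rewrite /Ip -eL; apply: le_Rintegral => //; first exact: mD.
by move=> x _; exact: pw_sub.
Qed.

Lemma inLp_trunc s r f : 0 < s -> inLp s f ->
  inLp s (trunc r f) /\ Ip s (trunc r f) <= Ip s f.
Proof.
move=> s0 Lf; apply: inLp_le => //; last exact: trunc_le.
by apply: mtrunc; case: Lf.
Qed.


Lemma conjq (p q : R) : 1 < p -> p^-1 + q^-1 = 1 -> 1 < q.
Proof.
move=> p1 pq.
have p0 : 0 < p by lra.
have ip1 : p^-1 < 1 by rewrite invf_lt1.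
have ip0 : 0 < p^-1 by rewrite invr_gt0.
have iq0 : 0 < q^-1 by lra.
have iq1 : q^-1 < 1 by lra.
rewrite invr_gt0 in iq0.
by rewrite invf_lt1 in iq1.
Qed.

Lemma divle (x p : R) : 1 <= p -> 0 <= x -> x / p <= x.
Proof.
move=> p1 x0; rewrite ler_pdivrMr; last lra.
nra.
Qed.

Lemma pw_young (p q a b l : R) : 1 < p -> p^-1 + q^-1 = 1 -> 0 < l ->
  `|a * b| <= l `^ p * `|a| `^ p + l^-1 `^ q * `|b| `^ q.
Proof.
move=> p1 pq l0.
have q1 := conjq p1 pq.
have -> : `|a * b| = (l * `|a|) * (l^-1 * `|b|).
  by rewrite mulrACA mulfV ?gt_eqF// mul1r normrM.
apply: le_trans (conjugate_powR _ _ _ _ pq) _.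
- by rewrite mulr_ge0// ltW.
- by rewrite mulr_ge0// invr_ge0 ltW.
- lra.
- lra.
rewrite -!powRM ?invr_ge0 ?(ltW l0)//.
by apply: lerD; apply: divle; rewrite ?powR_ge0//; lra.
Qed.


Lemma int_young p q u v l : 1 < p -> p^-1 + q^-1 = 1 -> inLp p u -> inLp q v ->
  0 < l ->
  mu.-integrable D (EFin \o (fun x => u x * v x)) /\
  `|\int[mu]_(x in D) (u x * v x)| <= l `^ p * Ip p u + l^-1 `^ q * Ip q v.
Proof.
move=> p1 pq Lu Lv l0.
have [iL eL] := iLin (l `^ p) (l^-1 `^ q) (int_pow Lu) (int_pow Lv).
have muv : measurable_fun D (fun x => u x * v x).
  by apply: measurable_funM; [case: Lu|case: Lv].
have iuv : mu.-integrable D (EFin \o (fun x => u x * v x)).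
  apply: (le_integrable mD _ _ iL); first exact/measurable_EFinP.
  move=> x _ /=; rewrite lee_fin.
  exact: le_trans (pw_young (u x) (v x) p1 pq l0) (ler_norm _).
have iuv' : mu.-integrable D (EFin \o (fun x => `|u x * v x|)).
  apply: (le_integrable mD _ _ iL).
    by apply/measurable_EFinP; exact: measurableT_comp.
  move=> x _ /=; rewrite lee_fin normr_id.
  exact: le_trans (pw_young (u x) (v x) p1 pq l0) (ler_norm _).
split => //.
apply: le_trans (le_normr_Rintegral mD iuv) _.
rewrite /Ip -eL; apply: le_Rintegral => //; first exact: mD.
by move=> x _; exact: pw_young.
Qed.


Lemma ismall (p q : R) : 1 < p -> p^-1 + q^-1 = 1 ->
  forall e : R, 0 < e -> forall C : R, exists2 d : R, 0 < d &
  forall u v, inLp p u -> inLp q v -> Ip p u <= d -> Ip q v <= C ->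
  `|\int[mu]_(x in D) (u x * v x)| <= e + e.
Proof.
move=> p1 pq e e0 C.
have q1 := conjq p1 pq.
pose c := `|C| + 1.
have c0 : 0 < c by rewrite /c; have := normr_ge0 C; lra.
pose eta := (e / c) `^ q^-1.
have eta0 : 0 < eta by apply: powR_gt0; exact: divr_gt0.
have etaq : eta `^ q = e / c.
  rewrite /eta -powRrM mulVf ?gt_eqF ?powRr1//; last lra.
  exact/ltW/divr_gt0.
pose l := eta^-1.
have l0 : 0 < l by rewrite invr_gt0.
have lp0 : 0 < l `^ p by exact: powR_gt0.
exists (e / l `^ p); first exact: divr_gt0.
move=> u v Lu Lv Iu Iv.
have [_ h] := int_young p1 pq Lu Lv l0.
apply: le_trans h _; rewrite /l invrK etaq; apply: lerD.
  apply: le_trans (ler_wpM2l (ltW lp0) Iu) _.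
  by rewrite mulrCA mulfV ?gt_eqF// mulr1.
apply: le_trans (ler_wpM2l _ Iv) _; first exact/ltW/divr_gt0.
apply: (@le_trans _ _ (e / c * c)); last by rewrite divfK ?gt_eqF.
apply: ler_wpM2l; first exact/ltW/divr_gt0.
by rewrite /c; have := ler_norm C; lra.
Qed.


Lemma iZ a (A : R -> R) : mu.-integrable D (EFin \o A) ->
  mu.-integrable D (EFin \o (fun x => a * A x)) /\
  \int[mu]_(x in D) (a * A x) = a * \int[mu]_(x in D) A x.
Proof.
move=> iA; split; last exact: RintegralZl mD iA.
by apply: (eq_integrable mD _ _ _ (integrableZl mD a iA)) => x _; rewrite /= EFinM.
Qed.

Lemma iabs (h : R -> R) : mu.-integrable D (EFin \o h) ->
  mu.-integrable D (EFin \o (fun x => `|h x|)).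
Proof.
move=> ih; apply: (le_integrable mD _ _ ih).
  apply/measurable_EFinP; apply: measurableT_comp => //.
  by move/integrableP: ih => [/measurable_EFinP].
by move=> x _ /=; rewrite normr_id.
Qed.

Lemma ptrunc (p r : R) f x : 0 < r -> 1 < p ->
  `|trunc r f x| <= `|f x| `^ p / r `^ (p - 1).
Proof.
move=> r0 p1; rewrite /trunc; case: ifP => h; last first.
  by rewrite normr0 divr_ge0 ?powR_ge0.
rewrite ler_pdivlMr ?powR_gt0//.
have fx0 : 0 < `|f x| by apply: lt_trans h.
rewrite [X in _ <= _ `^ X](_ : p = 1 + (p - 1)); last lra.
rewrite (@powRD _ `|f x| 1 (p - 1)); last by rewrite (gt_eqF fx0) implybT.
rewrite powRr1 ?normr_ge0//.
apply: ler_wpM2l => //; apply: ge0_ler_powR; rewrite ?nnegrE; try lra.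
Qed.

Lemma cross (p q r t : R) f g : 1 < p -> p^-1 + q^-1 = 1 ->
  inLp p f -> inLp q g -> 0 < r -> 0 <= t ->
  `|\int[mu]_(x in D) (trunc r f x * (g x - trunc t g x))|
     <= t / r `^ (p - 1) * Ip p f.
Proof.
move=> p1 pq Lf Lg r0 t0.
have q1 := conjq p1 pq.
have p0 : 0 < p by lra.
have q0 : 0 < q by lra.
have [Ltf _] := inLp_trunc r p0 Lf.
have [Ltg _] := inLp_trunc t q0 Lg.
have [Lgd _] := inLp_sub q0 Lg Ltg.
have [iprod _] := int_young p1 pq Ltf Lgd ltr01.
have [iB eB] := iZ (t / r `^ (p - 1)) (int_pow Lf).
apply: le_trans (le_normr_Rintegral mD iprod) _.
rewrite /Ip -eB; apply: (le_Rintegral mD (iabs iprod) iB).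
move=> x _ /=; rewrite normrM.
have h1 : `|g x - trunc t g x| <= t.
  rewrite /trunc; case: ifP => h; first by rewrite subrr normr0.
  by rewrite subr0 leNgt h.
apply: le_trans (ler_wpM2l (normr_ge0 _) h1) _.
rewrite mulrC -mulrA; apply: ler_wpM2l => //.
rewrite mulrC; exact: ptrunc.
Qed.

Lemma iAdd (A B : R -> R) : mu.-integrable D (EFin \o A) ->
  mu.-integrable D (EFin \o B) ->
  mu.-integrable D (EFin \o (fun x => A x + B x)).
Proof.
move=> iA iB; apply: (eq_integrable mD _ _ _ (integrableD mD iA iB)) => x _.
by rewrite /= EFinD.
Qed.

End A.

Section U.
Variable R : realType.
Local Notation mu := (@lebesgue_measure R).
Local Notation D := (@I01 R).
Implicit Types (s r : R) (f u v w : R -> R).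
Variable U : set_system nat.
Hypothesis UU : UltraFilter U.

Lemma ucvg (a : nat -> R) M : (forall n, `|a n| <= M) -> a @ U --> ulim U a.
Proof.
move=> aM.
suff : exists p : R, a @ U --> p.
  move=> [p ap].
  have := (@cvg_lim _ (@Rhausdorff R) _ U (@ultra_proper _ _ UU) a p ap).
  by rewrite /ulim => ->.
have PF : ProperFilter (a @ U) by typeclasses eauto.
have [|p [_ cp]] := @segment_compact R (- M) M (a @ U) PF.
  apply: (@filterS _ U _ setT); last exact: filterT.
  by move=> n _ /=; rewrite in_itv /= -ler_norml.
exists p => B nB.
have [//|nU] := in_ultra_setVsetC (a @^-1` B) UU.
have [x [/= nBx Bx]] := cp (~` B) B nU nB.
by [].
Qed.

Lemma bdd_Ip s F : 0 < s -> bdd_seq s F ->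
  exists2 C, 0 <= C & forall n, Ip s (F n) <= C.
Proof.
move=> s0 [LF [M hM]].
have M0 : 0 <= M by apply: le_trans (hM 0%N); exact: lpnorm_ge0.
exists (M `^ s); first exact: powR_ge0.
move=> n; rewrite Ip_lpnorm//; apply: ge0_ler_powR => //; first exact: ltW.
by rewrite nnegrE lpnorm_ge0.
Qed.

Lemma unorm_small s (W : nat -> R -> R) C (eta : R) : 0 < s ->
  (forall n, Ip s (W n) <= C) -> unorm s U W < eta ->
  \forall n \near U, Ip s (W n) <= eta `^ s.
Proof.
move=> s0 hC hu.
have C0 : 0 <= C by apply: le_trans (hC 0%N); exact: Ip_ge0.
have bd : forall n, `|lpnorm s (W n)| <= C `^ s^-1.
  move=> n; rewrite ger0_norm ?lpnorm_ge0//.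
  apply: ge0_ler_powR; rewrite ?invr_ge0 ?nnegrE ?(ltW s0)//; last exact: hC.
  exact: Ip_ge0.
have cv := ucvg bd.
have := cvgr_le _ cv _ hu.
have FU : Filter U by typeclasses eauto.
move=> h.
suff sub : (fun n => lpnorm s (W n) <= eta) `<=` (fun n => Ip s (W n) <= eta `^ s).
  exact: (@filterS nat U FU _ _ sub (h FU)).
move=> n hn /=.
have eta0 : 0 <= eta by apply: le_trans hn; exact: lpnorm_ge0.
rewrite Ip_lpnorm//; apply: ge0_ler_powR; rewrite ?nnegrE ?lpnorm_ge0//.
exact: ltW.
Qed.


Lemma pick_pinfty (P : R -> Prop) (a : R) : (\forall x \near +oo, P x) ->
  exists x, a < x /\ P x.
Proof.
move=> [M [_ hM]]; exists (Num.max a M + 1).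
have h1 : a <= Num.max a M by rewrite le_max lexx.
have h2 : M <= Num.max a M by rewrite le_max lexx orbT.
split; first lra.
apply: hM; lra.
Qed.


Lemma KL (p q : R) F G H K : 1 < p -> p^-1 + q^-1 = 1 ->
  bdd_seq p F -> bdd_seq q G -> is_Rs p U F H -> is_Rs q U G K ->
  forall e : R, 0 < e -> \forall n \near U,
  `|\int[mu]_(x in D) (H n x * (G n x - K n x))| <= (e + e) + e + (e + e).
Proof.
move=> p1 pq bF bG [bH cH] [bK cK] e e0.
have q1 := conjq p1 pq.
have p0 : 0 < p by lra.
have q0 : 0 < q by lra.
have qp : q^-1 + p^-1 = 1 by rewrite addrC.
have FU : Filter U by typeclasses eauto.
have [CF CF0 hF] := bdd_Ip p0 bF.
have [CG CG0 hG] := bdd_Ip q0 bG.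
have [CH CH0 hH] := bdd_Ip p0 bH.
have [CK CK0 hK] := bdd_Ip q0 bK.
have LF := bF.1; have LG := bG.1; have LH := bH.1; have LK := bK.1.
have [d3 d30 hd3] := ismall q1 qp e0 CF.
pose eta3 := d3 `^ q^-1.
have eta30 : 0 < eta3 by exact: powR_gt0.
have eta3q : eta3 `^ q = d3.
  by rewrite /eta3 -powRrM mulVf ?gt_eqF// powRr1// ltW.
have [t [t0 ht]] := pick_pinfty 0 (cvgr_lt _ cK _ eta30).
have hU3 := @unorm_small q (fun n => K n \- trunc t (G n))
  (2 `^ q * CK + 2 `^ q * CG) eta3 q0.
have {hU3} hU3 : \forall n \near U, Ip q (K n \- trunc t (G n)) <= d3.
  rewrite -eta3q; apply: hU3 => // n.
  have [Lt It] := inLp_trunc t q0 (LG n).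
  have [_ Is] := inLp_sub q0 (LK n) Lt.
  apply: le_trans Is _; apply: lerD; apply: ler_wpM2l; rewrite ?powR_ge0//.
  exact: le_trans It _.
have [d1 d10 hd1] := ismall p1 pq e0 (2 `^ q * CG + 2 `^ q * CK).
pose eta1 := d1 `^ p^-1.
have eta10 : 0 < eta1 by exact: powR_gt0.
have eta1p : eta1 `^ p = d1.
  by rewrite /eta1 -powRrM mulVf ?gt_eqF// powRr1// ltW.
pose r0 := (t * CF / e + 1) `^ (p - 1)^-1.
have tCe : 0 <= t * CF / e by rewrite divr_ge0// ?mulr_ge0// ltW.
have r00 : 0 < r0 by apply: powR_gt0; exact: ltr_wpDl tCe ltr01.
have [r [r0r hr]] := pick_pinfty r0 (cvgr_lt _ cH _ eta10).
have r0' : 0 < r by apply: lt_trans r0r.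
have hU1 := @unorm_small p (fun n => H n \- trunc r (F n))
  (2 `^ p * CH + 2 `^ p * CF) eta1 p0.
have {hU1} hU1 : \forall n \near U, Ip p (H n \- trunc r (F n)) <= d1.
  rewrite -eta1p; apply: hU1 => // n.
  have [Lt It] := inLp_trunc r p0 (LF n).
  have [_ Is] := inLp_sub p0 (LH n) Lt.
  apply: le_trans Is _; apply: lerD; apply: ler_wpM2l; rewrite ?powR_ge0//.
  exact: le_trans It _.
have hcross : t / r `^ (p - 1) * CF <= e.
  have e1 : r0 `^ (p - 1) = t * CF / e + 1.
    have p10 : 0 < p - 1 by rewrite subr_gt0.
    rewrite /r0 -powRrM mulVf ?powRr1//; last exact: lt0r_neq0.
    exact: addr_ge0 tCe ler01.
  have rp : t * CF / e + 1 <= r `^ (p - 1).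
    rewrite -e1; apply: ge0_ler_powR; rewrite ?nnegrE ?subr_ge0 ?(ltW p1) ?(ltW r00) ?(ltW r0')//.
    exact: ltW.
  have rp0 : 0 < r `^ (p - 1) by exact: powR_gt0.
  rewrite mulrAC ler_pdivrMr//.
  have : e * (t * CF / e + 1) <= e * r `^ (p - 1) by apply: ler_wpM2l => //; exact: ltW.
  have -> : e * (t * CF / e + 1) = t * CF + e.
    by rewrite mulrDr mulr1 mulrC divfK ?gt_eqF.
  by move=> h; apply: le_trans h; rewrite lerDl ltW.
suff sub : (fun n => Ip q (K n \- trunc t (G n)) <= d3 /\ Ip p (H n \- trunc r (F n)) <= d1)
   `<=` (fun n => `|\int[mu]_(x in D) (H n x * (G n x - K n x))| <= (e + e) + e + (e + e)).
  exact: (@filterS nat U FU _ _ sub (filterI hU3 hU1)).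
move=> n [h3 h1] /=.
have [LA IA] := inLp_trunc r p0 (LF n).
have [LB IB] := inLp_trunc t q0 (LG n).
have [LHA _] := inLp_sub p0 (LH n) LA.
have [LGK IGK] := inLp_sub q0 (LG n) (LK n).
have [LGB _] := inLp_sub q0 (LG n) LB.
have [LKB _] := inLp_sub q0 (LK n) LB.
have [i1 _] := int_young p1 pq LHA LGK ltr01.
have [i2 _] := int_young p1 pq LA LGB ltr01.
have [i3 _] := int_young q1 qp LKB LA ltr01.
rewrite (@eq_Rintegral _ _ _ mu D (fun x => ((H n \- trunc r (F n)) x * (G n \- K n) x
    + trunc r (F n) x * (G n \- trunc t (G n)) x)
    - (K n \- trunc t (G n)) x * trunc r (F n) x)); last first.
  by move=> x _ /=; ring.
rewrite (RintegralB (@mD R) (iAdd i1 i2) i3) (RintegralD (@mD R) i1 i2).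
apply: le_trans (ler_normB _ _) _; apply: lerD; first apply: le_trans (ler_normD _ _) _.
- apply: lerD.
  + apply: hd1 => //.
    apply: le_trans IGK _; apply: lerD; apply: ler_wpM2l; rewrite ?powR_ge0//.
  + apply: le_trans (cross p1 pq (LF n) (LG n) r0' (ltW t0)) _.
    apply: le_trans hcross; apply: ler_wpM2l; last exact: hF.
    by rewrite divr_ge0 ?powR_ge0// ltW.
- apply: hd3 => //; exact: le_trans IA _.
Qed.

End U.

Lemma small_eq (R : realType) (x y : R) :
  (forall e : R, 0 < e -> `|x - y| <= 10 * e) -> x = y.
Proof.
move=> h; apply/eqP; rewrite -subr_eq0 -normr_eq0.
have [//|d0] := eqVneq `|x - y| 0.
have dp : 0 < `|x - y| by rewrite lt0r d0 normr_ge0.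
have := h (`|x - y| / 20) (divr_gt0 dp _).
move: dp; set d := `|x - y|; move=> dp; rewrite ltr0n => /(_ isT).
lra.
Qed.

Lemma ten (R : realType) (e : R) :
  10 * e = ((e + e) + e + (e + e)) + ((e + e) + e + (e + e)).
Proof. lra. Qed.

Unset Implicit Arguments.

Theorem lemma2p4 (R : realType) (p q : R) (U : set_system nat) :
  1 < p -> p^-1 + q^-1 = 1 ->
  UltraFilter U -> (forall n : nat, ~ U [set n]) ->
  forall F G Hp Kq : nat -> R -> R,
  bdd_seq p F -> bdd_seq q G ->
  is_Rs p U F Hp -> is_Rs q U G Kq ->
  upair U Hp G = upair U F Kq.
Proof.
move=> p1 pq UU _ F G H K bF bG RH RK.
have q1 := conjq p1 pq.
have p0 : 0 < p by lra.
have q0 : 0 < q by lra.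
have qp : q^-1 + p^-1 = 1 by rewrite addrC.
have FU : Filter U by typeclasses eauto.
have PU : ProperFilter U by typeclasses eauto.
have [bH _] := RH; have [bK _] := RK.
have [CF CF0 hF] := bdd_Ip p0 bF.
have [CG CG0 hG] := bdd_Ip q0 bG.
have [CH CH0 hH] := bdd_Ip p0 bH.
have [CK CK0 hK] := bdd_Ip q0 bK.
have LF := bF.1; have LG := bG.1; have LH := bH.1; have LK := bK.1.
pose a (n : nat) := \int[lebesgue_measure]_(x in @I01 R) (H n x * G n x).
pose b (n : nat) := \int[lebesgue_measure]_(x in @I01 R) (F n x * K n x).
have ba : forall n, `|a n| <= CH + CG.
  move=> n; have [_ h] := int_young p1 pq (LH n) (LG n) ltr01.
  apply: le_trans h _; rewrite invr1 !powR1 !mul1r.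
  by apply: lerD.
have bb : forall n, `|b n| <= CF + CK.
  move=> n; have [_ h] := int_young p1 pq (LF n) (LK n) ltr01.
  apply: le_trans h _; rewrite invr1 !powR1 !mul1r.
  by apply: lerD.
have ap := ucvg UU ba.
have bp := ucvg UU bb.
change (ulim U a = ulim U b).
apply: small_eq => e e0.
have cv := @cvgB _ _ _ U FU _ _ _ _ ap bp.
have cvn := @cvg_norm _ _ _ U FU _ _ cv.
apply: (@cvgr_to_le _ U PU _ _ _ _ cvn).
have k1 := KL UU p1 pq bF bG RH RK e0.
have k2 := KL UU q1 qp bG bF RK RH e0.
suff sub : (fun n => `|\int[lebesgue_measure]_(x in @I01 R) (H n x * (G n x - K n x))| <= (e + e) + e + (e + e) /\
   `|\int[lebesgue_measure]_(x in @I01 R) (K n x * (F n x - H n x))| <= (e + e) + e + (e + e))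
   `<=` (fun n => `|(a - b) n| <= 10 * e).
  exact: (@filterS nat U FU _ _ sub (filterI k1 k2)).
move=> n [h1 h2] /=.
have [LGK _] := inLp_sub q0 (LG n) (LK n).
have [LFH _] := inLp_sub p0 (LF n) (LH n).
have [iHG _] := int_young p1 pq (LH n) (LG n) ltr01.
have [iFK _] := int_young p1 pq (LF n) (LK n) ltr01.
have [iHGK _] := int_young p1 pq (LH n) LGK ltr01.
have [iKFH _] := int_young q1 qp (LK n) LFH ltr01.
rewrite /a /b [in X in `|X| <= _]/GRing.add /= [in X in `|X| <= _]/GRing.opp /=.
rewrite -(RintegralB (@mD R) iHG iFK).
rewrite (@eq_Rintegral _ _ _ lebesgue_measure (@I01 R) (fun x => H n x * (G n \- K n) x
   - K n x * (F n \- H n) x)); last by move=> x _ /=; ring.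
rewrite (RintegralB (@mD R) iHGK iKFH).
apply: le_trans (ler_normB _ _) _.
rewrite ten.
exact: lerD.
Qed.
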